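(* Let $R$ be a Noetherian ring, let $N\subsetneq M$ be finitely generated $R$-modules, and let $X\subseteq\operatorname{Ass}(M/N)$. Then the primary decompositions of $N$ in $M$ are independent over $X$ if and only if $X$ is an open subset of $\operatorname{Ass}(M/N)$, where $\operatorname{Ass}(M/N)$ carries the subspace topology induced from the Zariski topology on $\operatorname{Spec}(R)$.
   Context: A submodule $Q\subseteq M$ is $P$-primary if $\operatorname{Ass}(M/Q)=\{P\}$. A primary decomposition of $N$ in $M$ means an irredundant and minimal primary decomposition $N=Q_1\cap\cdots\cap Q_s$ with $Q_i$ being $P_i$-primary, the $P_i$ distinct, so $\operatorname{Ass}(M/N)=\{P_1,\dots,P_s\}$; $Q_i$ is called a $P_i$-primary component of $N$ in $M$, and $\Lambda_{P}(N\subsetneq M)$ is the set of all $P$-primary components of $N$ in $M$ (over all such decompositions). Writing $X=\{P_1,\dots,P_r\}$ with $\operatorname{Ass}(M/N)=\{P_1,\dots,P_s\}$, the primary decompositions of $N$ in $M$ are called independent over $X$ if for any two primary decompositions $N=Q_1\cap\cdots\cap Q_s=Q_1'\cap\cdots\cap Q_s'$ with $Q_i,Q_i'\in\Lambda_{P_i}(N\subsetneq M)$ for all $i$, one has $Q_1\cap\cdots\cap Q_r=Q_1'\cap\cdots\cap Q_r'$. *)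

(* Defs.v *)
From HB Require Import structures.
From mathcomp Require Import all_boot all_algebra.
From mathcomp Require Import boolp classical_sets.
Set Implicit Arguments. Unset Strict Implicit. Unset Printing Implicit Defensive.
Import GRing.Theory.
Local Open Scope ring_scope.
Local Open Scope classical_set_scope.

Section CommAlg.
Variable R : comNzRingType.

Definition is_ideal (I : set R) : Prop :=
  I 0 /\ (forall x y, I x -> I y -> I (x + y)) /\ (forall r x, I x -> I (r * x)).

Definition prime_ideal (P : set R) : Prop :=
  is_ideal P /\ ~ P 1 /\ (forall a b, P (a * b) -> P a \/ P b).

Definition fin_gen_ideal (I : set R) : Prop :=
  exists s : seq R, forall x,
    I x <-> exists c : 'I_(size s) -> R, x = \sum_(i < size s) c i * s`_i.

Definition noetherian_ring : Prop := forall I, is_ideal I -> fin_gen_ideal I.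

(* Zariski topology on Spec R: open sets are D(S) = {P | ~ S <= P}.
   X is open in the subspace A of Spec R. *)
Definition zariski_open_in (A X : set (set R)) : Prop :=
  exists S : set R, X = A `&` [set P | ~ (S `<=` P)].

Variable M : lmodType R.

Definition is_submodule (N : set M) : Prop :=
  N 0 /\ (forall x y, N x -> N y -> N (x + y)) /\ (forall r x, N x -> N (r *: x)).

Definition fin_gen_submodule (N : set M) : Prop :=
  exists s : seq M, forall x,
    N x <-> exists c : 'I_(size s) -> R, x = \sum_(i < size s) c i *: s`_i.

Definition fin_gen_module : Prop := fin_gen_submodule [set: M].

(* (N :_R m) = Ann_R (m + N) in M/N *)
Definition colon (N : set M) (m : M) : set R := [set r | N (r *: m)].

Definition Ass (N : set M) : set (set R) :=
  [set P | prime_ideal P /\ exists m : M, P = colon N m].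

Definition primary_for (P : set R) (Q : set M) : Prop :=
  is_submodule Q /\ Ass Q = [set P].

Definition primary_decomposition (N : set M) (s : nat)
    (P : 'I_s -> set R) (Q : 'I_s -> set M) : Prop :=
  [/\ forall i, primary_for (P i) (Q i),
      injective P,
      N = \bigcap_(i in [set: 'I_s]) Q i &
      forall j, N <> \bigcap_(i in [set i | i <> j]) Q i].

Definition Lambda (P : set R) (N : set M) : set (set M) :=
  [set Q0 | exists s (Pf : 'I_s -> set R) (Qf : 'I_s -> set M),
     primary_decomposition N Pf Qf /\ exists i, Pf i = P /\ Qf i = Q0].

Definition independent_over (N : set M) (X : set (set R)) : Prop :=
  forall s (P : 'I_s -> set R) (Q Q' : 'I_s -> set M),
    primary_decomposition N P Q -> primary_decomposition N P Q' ->
    (forall i, Lambda (P i) N (Q i)) -> (forall i, Lambda (P i) N (Q' i)) ->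
    \bigcap_(i in [set i | X (P i)]) Q i = \bigcap_(i in [set i | X (P i)]) Q' i.

End CommAlg.

(* Main.v *)
Require Import Defs.
From HB Require Import structures.
From mathcomp Require Import all_boot all_algebra.
From mathcomp Require Import boolp classical_sets.
From mathcomp Require Import ring.
Set Implicit Arguments. Unset Strict Implicit. Unset Printing Implicit Defensive.
Import GRing.Theory.
Local Open Scope ring_scope.
Local Open Scope classical_set_scope.

Section Gen.
Variable R : comNzRingType.
Variable V : lmodType R.

Fixpoint spn (s : seq V) : set V :=
  match s with
  | [::] => [set x | x = 0]
  | h :: t => [set x | exists r y, spn t y /\ x = r *: h + y]
  end.

Lemma spnE s x : (exists c : 'I_(size s) -> R, x = \sum_(i < size s) c i *: s`_i) <-> spn s x.
Proof.
elim: s x => [|h t IH] x /=.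
  split; [by case=> c ->; rewrite big_ord0 | move=> ->; exists (fun _ => 0); by rewrite big_ord0].
split.
  case=> c ->; rewrite big_ord_recl /=.
  exists (c ord0), (\sum_(i < size t) c (lift ord0 i) *: t`_i); split => //.
  by apply/IH; exists (fun i => c (lift ord0 i)).
case=> r [y [/IH [c ->] ->]].
exists (fun i : 'I_(size t).+1 => match unlift ord0 i with Some j => c j | None => r end).
rewrite big_ord_recl /= unlift_none; congr (_ + _).
by apply: eq_bigr => i _; rewrite liftK.
Qed.

Lemma sub0 (N : set V) : is_submodule N -> N 0. Proof. by case. Qed.
Lemma subD (N : set V) x y : is_submodule N -> N x -> N y -> N (x + y).
Proof. by case=> _ [h _]; apply: h. Qed.
Lemma subZ (N : set V) r x : is_submodule N -> N x -> N (r *: x).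
Proof. by case=> _ [_ h]; apply: h. Qed.
Lemma subN (N : set V) x : is_submodule N -> N x -> N (- x).
Proof. by move=> hN hx; rewrite -scaleN1r; apply: subZ. Qed.
Lemma subB (N : set V) x y : is_submodule N -> N x -> N y -> N (x - y).
Proof. by move=> hN hx hy; apply: subD => //; apply: subN. Qed.
Lemma sub_sum (N : set V) (I : Type) (r : seq I) (P : pred I) (F : I -> V) :
  is_submodule N -> (forall i, P i -> N (F i)) -> N (\sum_(i <- r | P i) F i).
Proof. by move=> hN hF; apply: big_ind => //; [apply: sub0|move=> x y; apply: subD]. Qed.

Lemma spn_sub (N : set V) s : is_submodule N -> (forall y, y \in s -> N y) -> spn s `<=` N.
Proof.
move=> hN; elim: s => [|h t IH] hs x /=; first by move=> ->; apply: sub0.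
case=> r [y [ty ->]]; apply: subD => //; first by apply: subZ => //; apply: hs; rewrite inE eqxx.
apply: IH => // z zt; apply: hs; by rewrite inE zt orbT.
Qed.

Lemma spn_submodule s : is_submodule (spn s).
Proof.
elim: s => [|h t [IH0 [IHD IHZ]]] /=.
  split=> //; split; [by move=> x y -> ->; rewrite addr0|by move=> r x ->; rewrite scaler0].
split; first by exists 0, 0; rewrite scale0r addr0.
split.
  move=> x y [r1 [y1 [t1 ->]]] [r2 [y2 [t2 ->]]]; exists (r1 + r2), (y1 + y2); split; first exact: IHD.
  by rewrite scalerDl -!addrA; congr (_ + _); rewrite addrCA.
move=> a x [r [y [ty ->]]]; exists (a * r), (a *: y); split; first exact: IHZ.
by rewrite scalerDr scalerA.
Qed.

Lemma spn_mem s y : y \in s -> spn s y.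
Proof.
elim: s => [|h t IH] //.
rewrite inE => /orP [/eqP ->|yt] /=.
  by exists 1, 0; split; [exact: sub0 (spn_submodule t)|rewrite scale1r addr0].
by exists 0, y; split; [apply: IH|rewrite scale0r add0r].
Qed.

Definition noeth_mod := forall L : set V, is_submodule L -> fin_gen_submodule L.

Lemma chain_mono (c : nat -> set V) : (forall n, c n `<=` c n.+1) ->
  forall n m, (n <= m)%N -> c n `<=` c m.
Proof.
move=> h n m /subnK <-; elim: (m - n)%N => //= k IH.
by rewrite addSn => x /IH /h.
Qed.

Lemma acc_mod : noeth_mod -> forall c : nat -> set V, (forall n, is_submodule (c n)) ->
  (forall n, c n `<=` c n.+1) -> exists n, forall k, c k `<=` c n.
Proof.
move=> hN c hs hc.
pose U := [set x | exists n, c n x].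
have hU : is_submodule U.
  split; first by exists 0%N; apply: sub0.
  split.
    move=> x y [n xn] [m ym]; exists (maxn n m); apply: subD => //.
      by apply: (chain_mono hc (leq_maxl n m)).
    by apply: (chain_mono hc (leq_maxr n m)).
  by move=> r x [n xn]; exists n; apply: subZ.
have [s hsU] := hN U hU.
have hsU' : forall x, U x <-> spn s x by move=> x; rewrite -spnE; apply: hsU.
have : exists n, forall y, y \in s -> c n y.
  have : forall y, y \in s -> U y by move=> y /spn_mem /hsU'.
  elim: (s) => [|h t IH] hs0; first by exists 0%N.
  have [n hn] := hs0 h (mem_head _ _).
  have [|m hm] := IH; first by move=> y yt; apply: hs0; rewrite inE yt orbT.
  exists (maxn n m) => y; rewrite inE; case/orP => [/eqP ->|yt].
    by apply: (chain_mono hc (leq_maxl n m)).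
  by apply: (chain_mono hc (leq_maxr n m)); apply: hm.
case=> n hn; exists n => k x xk.
by apply: (spn_sub (hs n) hn); apply/hsU'; exists k.
Qed.

Lemma max_exists : noeth_mod -> forall Fm : set (set V),
  (forall A, Fm A -> is_submodule A) -> (exists A, Fm A) ->
  exists A, Fm A /\ forall B, Fm B -> A `<=` B -> B `<=` A.
Proof.
move=> hN Fm hF [A0 FA0].
apply: contrapT => hno.
have step : forall A, Fm A -> exists B, Fm B /\ A `<=` B /\ ~ (B `<=` A).
  move=> A FA; apply: contrapT => hB; apply: hno; exists A; split=> // B FB AB.
  apply: contrapT => nBA; apply: hB; by exists B.
pose g A := if pselect (Fm A) is left FA then sval (cid (step A FA)) else A.
have hg : forall A, Fm A -> Fm (g A) /\ A `<=` g A /\ ~ (g A `<=` A).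
  move=> A FA; rewrite /g; case: pselect => // FA'; exact: svalP (cid (step A FA')).
pose c n := iter n g A0.
have Fc : forall n, Fm (c n) by elim=> //= n IH; case: (hg _ IH).
have [n hn] := acc_mod hN (fun n => hF _ (Fc n)) (fun n => proj1 (proj2 (hg _ (Fc n)))).
by case: (hg _ (Fc n)) => _ [_]; apply; apply: (hn n.+1).
Qed.

End Gen.

Section Mod.
Variable R : comNzRingType.
Variable M : lmodType R.
Hypothesis noethR : noetherian_ring R.

Lemma noethRo : noeth_mod R^o.
Proof. exact: noethR. Qed.

Lemma spn_cat (a b : seq M) u v : spn a u -> spn b v -> spn (a ++ b) (u + v).
Proof.
elim: a u => [|h t IH] u /=; first by move=> -> ?; rewrite add0r.
case=> r [y [ty ->]] hv; exists r, (y + v); split; first exact: IH.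
by rewrite addrA.
Qed.

Lemma noeth_gen (g : seq M) (L : set M) : is_submodule L -> L `<=` spn g ->
  exists s, forall x, L x <-> spn s x.
Proof.
elim: g L => [|h t IH] L hL Lg.
  exists [::] => x; split; first exact: Lg.
  by move=> /= ->; apply: sub0.
pose I := [set r : R | exists l, L l /\ spn t (l - r *: h)].
have hI : @is_submodule R R^o I.
  split; first by exists 0; split; [apply: sub0|rewrite scale0r subr0; apply: sub0 (spn_submodule t)].
  split.
    move=> x y [l1 [L1 t1]] [l2 [L2 t2]]; exists (l1 + l2); split; first exact: subD.
    have -> : l1 + l2 - (x + y) *: h = (l1 - x *: h) + (l2 - y *: h).
      by rewrite scalerDl opprD addrACA.
    exact: subD (spn_submodule t) t1 t2.
  move=> a x [l [Ll tl]]; exists (a *: l); split; first exact: subZ.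
  have -> : a *: l - (a * x) *: h = a *: (l - x *: h) by rewrite scalerBr scalerA.
  apply: (subZ a (spn_submodule t)); exact: tl.
have [rs hrs] := noethR hI.
have hrs' : forall x, I x <-> @spn R R^o rs x by move=> x; rewrite -(@spnE R R^o); apply: hrs.
have hw : forall r, exists l, I r -> L l /\ spn t (l - r *: h).
  move=> r; case: (pselect (I r)) => [[l hl]|nI]; first by exists l.
  by exists 0.
pose wit r := sval (cid (hw r)).
have witP : forall r, I r -> L (wit r) /\ spn t (wit r - r *: h) by move=> r; exact: svalP (cid (hw r)).
pose L' := L `&` spn t.
have hL' : is_submodule L'.
  have [a0 [aD aZ]] := hL; have [b0 [bD bZ]] := spn_submodule t.
  split; first by split.
  split; first by move=> x y [? ?] [? ?]; split; [apply: aD|apply: bD].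
  by move=> r x [? ?]; split; [apply: aZ|apply: bZ].
have [s' hs'] := IH L' hL' (fun x => @proj2 _ _).
exists (map wit rs ++ s') => x; split; last first.
  apply: spn_sub => // y; rewrite mem_cat => /orP [/mapP [r rin ->]|ys'].
    by case: (witP r (proj2 (hrs' r) (@spn_mem _ R^o _ _ rin))).
  by have [] := proj2 (hs' y) (spn_mem ys').
move=> Lx; have [r [y [ty xE]]] := Lg x Lx.
have Ir : I r by exists x; split => //; rewrite xE addrC addKr.
have : forall rs0 r0, {subset rs0 <= rs} -> @spn R R^o rs0 r0 ->
    exists z, spn (map wit rs0) z /\ spn t (z - r0 *: h).
  elim=> [|a rs0 IH0] r0 sub0r /=.
    by move=> ->; exists 0; split => //; rewrite scale0r subr0; apply: sub0 (spn_submodule t).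
  case=> c [r' [hr' ->]].
  have [|z [hz1 hz2]] := IH0 r' _ hr'; first by move=> q qin; apply: sub0r; rewrite inE qin orbT.
  have ain : a \in rs by apply: sub0r; rewrite inE eqxx.
  have [_ wa] := witP a (proj2 (hrs' a) (@spn_mem _ R^o _ _ ain)).
  exists (c *: wit a + z); split; first by exists c, z.
  have -> : c *: wit a + z - (c * a + r') *: h = c *: (wit a - a *: h) + (z - r' *: h).
    by rewrite scalerBr scalerA scalerDl opprD addrACA.
  by apply: (subD (spn_submodule t)) => //; apply: (subZ _ (spn_submodule t)).
move=> /(_ rs r (fun q qin => qin) (proj1 (hrs' r) Ir)) [z [hz1 hz2]].
have Lz : L z.
  apply: (spn_sub hL _ hz1) => q /mapP [r0 r0in ->].
  by case: (witP r0 (proj2 (hrs' r0) (@spn_mem _ R^o _ _ r0in))).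
have L'xz : L' (x - z).
  split; first exact: subB.
  have -> : x - z = y - (z - r *: h) by rewrite xE opprB addrA; congr (_ - _); rewrite addrC.
  exact: subB (spn_submodule t) ty hz2.
have -> : x = z + (x - z) by rewrite addrC subrK.
by apply: spn_cat => //; apply/hs'.
Qed.

Lemma noeth_modM : fin_gen_module M -> noeth_mod M.
Proof.
move=> [g hg] L hL.
have [s hs] := noeth_gen hL (fun x _ => proj1 (spnE g x) (proj1 (hg x) I)).
by exists s => x; rewrite hs spnE.
Qed.

Lemma colon_ideal (N : set M) m : is_submodule N -> @is_submodule R R^o (colon N m).
Proof.
move=> hN; split; first by rewrite /colon /= scale0r; apply: sub0.
split; first by move=> x y hx hy; rewrite /colon /= scalerDl; apply: subD.
by move=> r x hx; rewrite /colon /= -scalerA; apply: subZ.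
Qed.

Lemma assoc_exists (Q : set M) m : is_submodule Q -> ~ Q m ->
  exists r, ~ Q (r *: m) /\ prime_ideal (colon Q (r *: m)).
Proof.
move=> hQ nQm.
pose Fm := [set J : set R | exists r, ~ Q (r *: m) /\ J = colon Q (r *: m)].
have [J [[r [nQr ->]] Jmax]] : exists J, Fm J /\ forall B, Fm B -> J `<=` B -> B `<=` J.
  apply: (@max_exists R R^o noethRo Fm).
  - by move=> J [r [_ ->]]; apply: colon_ideal.
  - by exists (colon Q (1 *: m)), 1; split => //; rewrite scale1r.
exists r; split => //; split; first exact: colon_ideal.
split; first by rewrite /colon /= scale1r.
move=> a b hab; case: (pselect (colon Q (r *: m) a)) => [ha|na]; [by left|right].
have Fa : Fm (colon Q ((a * r) *: m)).
  by exists (a * r); split => //; rewrite -scalerA.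
have sub : colon Q (r *: m) `<=` colon Q ((a * r) *: m).
  move=> x; rewrite /colon /= => hx.
  have -> : x *: ((a * r) *: m) = a *: (x *: (r *: m)) by rewrite !scalerA ?exprS; congr (_ *: _); ring.
  by apply: (subZ a hQ).
apply: (Jmax _ Fa sub); rewrite /colon /=.
have -> : b *: ((a * r) *: m) = (a * b) *: (r *: m) by rewrite !scalerA ?exprS; congr (_ *: _); ring.
exact: hab.
Qed.

Lemma Ass_of (Q : set M) m : is_submodule Q -> ~ Q m -> exists r, ~ Q (r *: m) /\ Ass Q (colon Q (r *: m)).
Proof.
move=> hQ nQm; have [r [h1 h2]] := assoc_exists hQ nQm.
by exists r; split => //; split => //; exists (r *: m).
Qed.

Lemma prim_Ass P (Q : set M) J : primary_for P Q -> Ass Q J -> J = P.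
Proof. by case=> _ hA; rewrite hA. Qed.

Lemma prim_prime P (Q : set M) : primary_for P Q -> prime_ideal P.
Proof.
case=> _ hA; have : Ass Q P by rewrite hA.
by case.
Qed.

Lemma prim_ne P (Q : set M) : primary_for P Q -> exists m0, ~ Q m0.
Proof.
case=> _ hA; have : Ass Q P by rewrite hA.
case=> [[_ [n1 _]] [m0 hP]]; exists m0 => Qm0; apply: n1; rewrite hP /colon /= scale1r //.
Qed.

Lemma prim_nzd P (Q : set M) u m : primary_for P Q -> ~ P u -> Q (u *: m) -> Q m.
Proof.
move=> hp nPu Qum; apply: contrapT => nQm.
have [r [nQr hA]] := Ass_of (proj1 hp) nQm.
have := prim_Ass hp hA => hP; apply: nPu; rewrite -hP /colon /= scalerA mulrC -scalerA.
exact: subZ _ (proj1 hp) Qum.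
Qed.

Lemma prim_nil P (Q : set M) x m : primary_for P Q -> P x -> exists k, Q (x ^+ k *: m).
Proof.
move=> hp Px.
pose c k := colon Q (x ^+ k *: m).
have hc : forall k, c k `<=` c k.+1.
  move=> k y; rewrite /c /colon /= => hy.
  have -> : y *: (x ^+ k.+1 *: m) = x *: (y *: (x ^+ k *: m)) by rewrite !scalerA ?exprS; congr (_ *: _); ring.
  exact: (subZ x (proj1 hp) hy).
have [n hn] := @acc_mod R R^o noethRo c (fun k => colon_ideal _ (proj1 hp)) hc.
exists n; apply: contrapT => nQ.
have [r [nQr hA]] := Ass_of (proj1 hp) nQ.
have hP := prim_Ass hp hA.
have : c n.+1 r.
  rewrite /c /colon /=.
  have -> : r *: (x ^+ n.+1 *: m) = x *: (r *: (x ^+ n *: m)) by rewrite !scalerA ?exprS; congr (_ *: _); ring.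
  by move: Px; rewrite -hP /colon /=.
by move/(hn n.+1).
Qed.

End Mod.

Section Prim.
Variable R : comNzRingType.
Variable M : lmodType R.
Hypothesis noethR : noetherian_ring R.

Lemma prime_prod (P : set R) (I : Type) (r : seq I) (f : I -> R) :
  prime_ideal P -> (forall i, ~ P (f i)) -> ~ P (\prod_(i <- r) f i).
Proof.
move=> [_ [n1 hp]] hf; elim: r => [|a r IH]; first by rewrite big_nil.
by rewrite big_cons => /hp [/hf|/IH].
Qed.

Lemma prime_avoid (P : set R) s (J : 'I_s -> set R) (D : set 'I_s) :
  prime_ideal P -> (forall i, D i -> is_ideal (J i)) ->
  (forall x, (forall i, D i -> J i x) -> P x) -> exists i, D i /\ J i `<=` P.
Proof.
move=> hP hJ hx; apply: contrapT => hno.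
have hr : forall i, exists r, (D i -> J i r) /\ ~ P r.
  move=> i; case: (pselect (D i)) => Di; last by exists 1; split => //; case: hP => _ [].
  apply: contrapT => hn; apply: hno; exists i; split => // y Jy.
  apply: contrapT => nPy; apply: hn; by exists y.
pose g i := sval (cid (hr i)).
have hg : forall i, ~ P (g i) by move=> i; exact: (proj2 (svalP (cid (hr i)))).
apply: (@prime_prod P _ (index_enum 'I_s) g hP hg); apply: hx => i Di.
rewrite (bigD1 i) //= mulrC; have [_ [_ hZ]] := hJ i Di; apply: hZ.
exact: (proj1 (svalP (cid (hr i))) Di).
Qed.

Lemma colon_cap s (Q : 'I_s -> set M) (D : set 'I_s) m :
  colon (\bigcap_(i in D) Q i) m = fun x => forall i, D i -> colon (Q i) m x.
Proof. by []. Qed.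

Lemma ass_in s (P : 'I_s -> set R) (Q : 'I_s -> set M) (D : set 'I_s) (N : set M) :
  (forall i, D i -> primary_for (P i) (Q i)) -> N = \bigcap_(i in D) Q i ->
  forall P0, Ass N P0 -> exists i, D i /\ P0 = P i.
Proof.
move=> hp -> P0 [hP0 [m hm]].
have [i [Di sub]] : exists i, D i /\ colon (Q i) m `<=` P0.
  apply: (prime_avoid hP0) => [i Di|x hx]; first exact: (colon_ideal m (proj1 (hp i Di))).
  by rewrite hm.
exists i; split => //.
have e : P0 = colon (Q i) m.
  apply/seteqP; split => // x; rewrite hm => hx; exact: hx i Di.
apply: (prim_Ass (hp i Di)); split; [exact: hP0 | by exists m].
Qed.

Lemma ass_comp s (P : 'I_s -> set R) (Q : 'I_s -> set M) (N : set M) :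
  primary_decomposition N P Q -> forall j, Ass N (P j).
Proof.
move=> [hp injP hN hirr] j.
have [m [hm nNm]] : exists m, (\bigcap_(i in [set i | i <> j]) Q i) m /\ ~ N m.
  apply: contrapT => hn; apply: (hirr j); apply/seteqP; split.
    by move=> x; rewrite hN => hx i _; apply: hx.
  move=> x hx; apply: contrapT => nx; apply: hn; by exists x.
have nQj : ~ Q j m.
  move=> Qjm; apply: nNm; rewrite hN => i _.
  by case: (pselect (i = j)) => [->|ij] //; apply: hm.
have [r [nQr hA]] := Ass_of noethR (proj1 (hp j)) nQj.
have e := prim_Ass (hp j) hA.
split; first exact: prim_prime (hp j).
exists (r *: m); rewrite -e; apply/seteqP; split => x; rewrite /colon /= hN.
  move=> hx i _; case: (pselect (i = j)) => [->|ij] //.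
  by apply: (subZ x (proj1 (hp i))); apply: (subZ r (proj1 (hp i))); apply: hm.
by move=> hx; apply: hx.
Qed.

Lemma prim_cap P (Q1 Q2 : set M) : primary_for P Q1 -> primary_for P Q2 ->
  primary_for P (Q1 `&` Q2).
Proof.
move=> h1 h2.
have hs : is_submodule (Q1 `&` Q2).
  have [a0 [aD aZ]] := proj1 h1; have [b0 [bD bZ]] := proj1 h2.
  split; first by split.
  split; first by move=> x y [? ?] [? ?]; split; [apply: aD|apply: bD].
  by move=> r x [? ?]; split; [apply: aZ|apply: bZ].
have sub : forall P0, Ass (Q1 `&` Q2) P0 -> P0 = P.
  move=> P0 [hP0 [m hm]].
  case: (pselect (colon Q1 m `<=` P0)) => c1.
    apply: (prim_Ass h1); split => //; exists m; apply/seteqP; split => // x.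
    by rewrite hm => -[].
  have [a [a1 aP]] : exists a, colon Q1 m a /\ ~ P0 a.
    apply: contrapT => hn; apply: c1 => a ha; apply: contrapT => na; apply: hn; by exists a.
  apply: (prim_Ass h2); split => //; exists m; apply/seteqP; split => x.
    by rewrite hm => -[].
  move=> hx; have : P0 (a * x).
    rewrite hm; split; rewrite /colon /=.
      by rewrite mulrC -scalerA; apply: (subZ x (proj1 h1)).
    by rewrite -scalerA; apply: (subZ a (proj1 h2)).
  by case: hP0 => _ [_ hpr] /hpr [].
split => //; apply/seteqP; split => P0; first by move/sub => ->.
move=> -> /=.
have [m0 nm0] := prim_ne h1.
have [r [_ hA]] := Ass_of noethR hs (fun h => nm0 (proj1 h)).
by rewrite -(sub _ hA).
Qed.

End Prim.

Section Exist.
Variable R : comNzRingType.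
Variable M : lmodType R.
Hypothesis noethR : noetherian_ring R.
Hypothesis fgM : fin_gen_module M.

Definition Pd (F : set M) s := exists (P : 'I_s -> set R) (Q : 'I_s -> set M),
  (forall i, primary_for (P i) (Q i)) /\ F = \bigcap_(i in [set: 'I_s]) Q i.

Lemma Pd_cap (A B : set M) s1 s2 : Pd A s1 -> Pd B s2 -> Pd (A `&` B) (s1 + s2).
Proof.
move=> [P1 [Q1 [h1 ->]]] [P2 [Q2 [h2 ->]]].
exists (fun i => match split i with inl j => P1 j | inr k => P2 k end).
exists (fun i => match split i with inl j => Q1 j | inr k => Q2 k end).
split; first by move=> i; case: (split i).
apply/seteqP; split => x.
  move=> [hA hB] i _; case: (split i) => j; [exact: hA|exact: hB].
move=> hx; split => j _.
  by have := hx (lshift s2 j) I; rewrite (unsplitK (inl _ j)).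
by have := hx (rshift s1 j) I; rewrite (unsplitK (inr _ j)).
Qed.

Definition addline (G : set M) m := [set x | exists f c, G f /\ x = f + c *: m].

Lemma addline_sub G m : is_submodule G -> is_submodule (addline G m).
Proof.
move=> hG; split; first by exists 0, 0; split; [apply: sub0|rewrite scale0r addr0].
split.
  move=> x y [f1 [c1 [G1 ->]]] [f2 [c2 [G2 ->]]]; exists (f1 + f2), (c1 + c2); split.
    exact: subD.
  by rewrite scalerDl addrACA.
move=> a x [f [c [Gf ->]]]; exists (a *: f), (a * c); split; first exact: subZ.
by rewrite scalerDr scalerA.
Qed.

Lemma addline_incl G m : is_submodule G -> G `<=` addline G m.
Proof. by move=> hG x Gx; exists x, 0; split => //; rewrite scale0r addr0. Qed.

Lemma addline_m G m : is_submodule G -> addline G m m.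
Proof. by move=> hG; exists 0, 1; split; [apply: sub0|rewrite scale1r add0r]. Qed.

Lemma colon_shift (G : set M) m r : is_submodule G -> prime_ideal (colon G m) ->
  ~ G (r *: m) -> colon G (r *: m) = colon G m.
Proof.
move=> hG [_ [_ hpr]] nG; apply/seteqP; split => y; rewrite /colon /=.
  rewrite scalerA mulrC => /hpr [] //; by rewrite /colon /=.
by move=> hy; rewrite scalerA mulrC -scalerA; apply: subZ.
Qed.

Lemma colon_add (G : set M) f v : is_submodule G -> G f -> colon G (f + v) = colon G v.
Proof.
move=> hG Gf; apply/seteqP; split => y; rewrite /colon /= scalerDr.
  move=> h; have -> : y *: v = y *: f + y *: v - y *: f by rewrite addrC addKr.
  by apply: subB => //; apply: subZ.
by move=> h; apply: subD => //; apply: subZ.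
Qed.

Lemma line_cap (G : set M) m1 m2 : is_submodule G ->
  prime_ideal (colon G m1) -> prime_ideal (colon G m2) -> colon G m1 <> colon G m2 ->
  G = addline G m1 `&` addline G m2.
Proof.
move=> hG p1 p2 ne; apply/seteqP; split => x.
  by move=> Gx; split; apply: addline_incl.
move=> [[f1 [c1 [G1 e1]]] [f2 [c2 [G2 e2]]]]; apply: contrapT => nGx.
have n1 : ~ G (c1 *: m1) by move=> h; apply: nGx; rewrite e1; apply: subD.
have n2 : ~ G (c2 *: m2) by move=> h; apply: nGx; rewrite e2; apply: subD.
apply: ne; rewrite -(colon_shift hG p1 n1) -(colon_shift hG p2 n2).
by rewrite -(colon_add (c1 *: m1) hG G1) -(colon_add (c2 *: m2) hG G2) -e1 -e2.
Qed.

Lemma decomp_ex (F : set M) : is_submodule F -> (exists m, ~ F m) -> exists s, Pd F s.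
Proof.
move=> hF hm; apply: contrapT => hno.
pose Fm := [set G | is_submodule G /\ (exists m, ~ G m) /\ ~ exists s, Pd G s].
have [G [[hG [[m nGm] nPd]] Gmax]] : exists G, Fm G /\ forall B, Fm B -> G `<=` B -> B `<=` G.
  apply: (max_exists (noeth_modM noethR fgM)); first by move=> A [].
  by exists F.
apply: nPd.
have [r [nGr hA]] := Ass_of noethR hG nGm.
case: (pselect (Ass G = [set colon G (r *: m)])) => hAs.
  exists 1%N, (fun _ => colon G (r *: m)), (fun _ => G); split; first by move=> _; split.
  apply/seteqP; split => x; [by move=> hx i _ | by move=> hx; apply: (hx ord0)].
have [P2 [hA2 nP]] : exists P2, Ass G P2 /\ P2 <> colon G (r *: m).
  apply: contrapT => hn; apply: hAs; apply/seteqP; split => P0 /=.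
    move=> h0; apply: contrapT => n0; apply: hn; by exists P0.
  by move=> ->.
case: hA2 => hP2 [m2 e2]; case: hA => hP1 _.
set m1 := r *: m in hP1 nP.
rewrite e2 in hP2 nP.
have nG1 : ~ G m1 by move=> h; case: hP1 => _ [+ _]; rewrite /colon /= scale1r.
have nG2 : ~ G m2 by move=> h; case: hP2 => _ [+ _]; rewrite /colon /= scale1r.
have eG := line_cap hG hP1 hP2 (fun e => nP (esym e)).
have hfin : forall mi mj, ~ G mi -> ~ G mj -> G = addline G mi `&` addline G mj ->
    exists s, Pd (addline G mi) s.
  move=> mi mj ni nj eij; apply: contrapT => nP'.
  have hGi := addline_sub mi hG.
  have pr : exists y, ~ addline G mi y.
    apply: contrapT => hall; apply: nj; rewrite eij; split; last exact: addline_m.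
    by apply: contrapT => hn; apply: hall; exists mj.
  have := Gmax (addline G mi) (conj hGi (conj pr nP')) (addline_incl mi hG).
  by move=> /(_ mi (addline_m mi hG)).
have [s1 h1] := hfin m1 m2 nG1 nG2 eG.
have [s2 h2] := hfin m2 m1 nG2 nG1 (etrans eG (setIC _ _)).
by rewrite eG; exists (s1 + s2)%N; apply: Pd_cap.
Qed.

Lemma pdec_exists (F : set M) : is_submodule F -> (exists m, ~ F m) ->
  exists s (P : 'I_s -> set R) (Q : 'I_s -> set M), primary_decomposition F P Q.
Proof.
move=> hF hm.
have ex : exists s, `[< Pd F s >] by have [s hs] := decomp_ex hF hm; exists s; apply/asboolP.
case: (ex_minnP ex) => s0 /asboolP [P [Q [hp hFe]]] hmin.
case: s0 P Q hp hFe hmin => [|s] P Q hp hFe hmin.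
  exfalso; case: hm => m; apply; rewrite hFe => i _.
  by have := ltn_ord i; rewrite ltn0.
have contra : Pd F s -> False.
  by move=> /asboolP /hmin; rewrite ltnn.
exists s.+1, P, Q; split => //.
- move=> i j ePij; apply: contrapT => nij; apply: contra.
  exists (fun k => P (lift j k)).
  exists (fun k => if lift j k == i then Q i `&` Q j else Q (lift j k)); split.
    move=> k; case: eqP => [e|_]; last exact: hp.
    rewrite e; apply: prim_cap => //; rewrite ePij; exact: hp.
  apply/seteqP; split => x.
    rewrite hFe => hx k _; case: eqP => _; last exact: hx.
    by split; apply: hx.
  move=> hx; rewrite hFe => l _; case: (unliftP j l) => [k ->|->].
    by have := hx k I; case: eqP => [e [hi _]|//]; rewrite e.
  case: (unliftP j i) => [k ei|eij]; last by exfalso; apply: nij; rewrite eij.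
  by have := hx k I; rewrite -ei eqxx => -[].
- move=> j hFj; apply: contra.
  exists (fun k => P (lift j k)), (fun k => Q (lift j k)); split.
    by move=> k; apply: hp.
  apply/seteqP; split => x.
    rewrite hFj => hx k _; apply: hx => e; have := neq_lift j k; by rewrite e eqxx.
  move=> hx; rewrite hFj => i ij; case: (unliftP j i) => [k ->|eij]; first exact: hx.
  by exfalso; apply: ij.
Qed.

End Exist.

Section Sat.
Variable R : comNzRingType.
Variable M : lmodType R.
Hypothesis noethR : noetherian_ring R.
Hypothesis fgM : fin_gen_module M.
Variable P : set R.
Hypothesis hP : prime_ideal P.

Definition sat (N : set M) : set M := [set m | exists u, ~ P u /\ N (u *: m)].

Lemma nP1 : ~ P 1. Proof. by case: hP => _ []. Qed.
Lemma nPmul u v : ~ P u -> ~ P v -> ~ P (u * v).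
Proof. by move=> nu nv; case: hP => _ [_ h] /h []. Qed.
Lemma PD x y : P x -> P y -> P (x + y).
Proof. by case: hP => [[_ [h _]] _]; apply: h. Qed.
Lemma PM r x : P x -> P (r * x).
Proof. by case: hP => [[_ [_ h]] _]; apply: h. Qed.

Lemma sat_sub N : is_submodule N -> is_submodule (sat N).
Proof.
move=> hN; split; first by exists 1; split; [exact: nP1|rewrite scaler0; apply: sub0].
split.
  move=> x y [u1 [n1 h1]] [u2 [n2 h2]]; exists (u1 * u2); split; first exact: nPmul.
  have -> : (u1 * u2) *: (x + y) = u2 *: (u1 *: x) + u1 *: (u2 *: y).
    by rewrite scalerDr !scalerA [u2 * u1]mulrC.
  by apply: subD => //; apply: subZ.
move=> r x [u [nu h]]; exists u; split => //.
have -> : u *: (r *: x) = r *: (u *: x) by rewrite !scalerA mulrC.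
exact: subZ.
Qed.

Lemma sat_incl N : N `<=` sat N.
Proof. by move=> x Nx; exists 1; split; [exact: nP1|rewrite scale1r]. Qed.

Lemma sat_sat N : sat (sat N) `<=` sat N.
Proof.
move=> x [u [nu [v [nv h]]]]; exists (v * u); split; first exact: nPmul.
by rewrite -scalerA.
Qed.

Fixpoint spnP (s : seq M) : set M :=
  match s with
  | [::] => [set x | x = 0]
  | h :: t => [set x | exists p y, P p /\ spnP t y /\ x = p *: h + y]
  end.

Lemma spnP_sub s : is_submodule (spnP s).
Proof.
elim: s => [|h t [IH0 [IHD IHZ]]] /=.
  split=> //; split; [by move=> x y -> ->; rewrite addr0|by move=> r x ->; rewrite scaler0].
split; first by exists 0, 0; split; [case: hP => [[]]|rewrite scale0r addr0].
split.
  move=> x y [r1 [y1 [p1 [t1 ->]]]] [r2 [y2 [p2 [t2 ->]]]]; exists (r1 + r2), (y1 + y2).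
  split; first exact: PD.
  split; first exact: IHD.
  by rewrite scalerDl addrACA.
move=> a x [r [y [pr [ty ->]]]]; exists (a * r), (a *: y); split; first exact: PM.
split; first exact: IHZ.
by rewrite scalerDr scalerA.
Qed.

Lemma spnP_in (L : set M) s : is_submodule L -> (forall y, y \in s -> L y) -> spnP s `<=` L.
Proof.
move=> hL; elim: s => [|h t IH] hs x /=; first by move=> ->; apply: sub0.
case=> r [y [_ [ty ->]]]; apply: subD => //; first by apply: subZ => //; apply: hs; rewrite inE eqxx.
apply: IH => // z zt; apply: hs; by rewrite inE zt orbT.
Qed.

Lemma spnP_scale s x r : spn s x -> P r -> spnP s (r *: x).
Proof.
elim: s x => [|h t IH] x /=; first by move=> -> _; rewrite scaler0.
case=> c [y [ty ->]] Pr; exists (r * c), (r *: y); split; first by rewrite mulrC; apply: PM.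
split; first exact: IH.
by rewrite scalerDr scalerA.
Qed.

Definition addS (A B : set M) := [set x | exists a b, A a /\ B b /\ x = a + b].

Lemma addS_sub A B : is_submodule A -> is_submodule B -> is_submodule (addS A B).
Proof.
move=> hA hB; split; first by exists 0, 0; split; [apply: sub0|split; [apply: sub0|rewrite addr0]].
split.
  move=> x y [a1 [b1 [A1 [B1 ->]]]] [a2 [b2 [A2 [B2 ->]]]]; exists (a1 + a2), (b1 + b2).
  by split; [apply: subD|split; [apply: subD|rewrite addrACA]].
move=> r x [a [b [Aa [Bb ->]]]]; exists (r *: a), (r *: b).
by split; [apply: subZ|split; [apply: subZ|rewrite scalerDr]].
Qed.

Lemma nakayama (N : set M) (e : seq M) : is_submodule N ->
  (forall x, x \in e -> sat (addS N (spnP e)) x) -> forall x, x \in e -> sat N x.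
Proof.
move=> hN; elim: e => [|h t IH] hyp x //.
have [u [nPu [n [z [Nn [[p [y [Pp [ty ez]]]] eu]]]]]] := hyp h (mem_head _ _).
pose v := u - p.
have nPv : ~ P v.
  move=> Pv; apply: nPu; have -> : u = v + p by rewrite /v subrK.
  exact: PD.
have vh : v *: h = n + y by rewrite /v scalerBl eu ez (addrC (p *: h)) addrA addrK.
have ht : forall x, x \in t -> sat (addS N (spnP t)) x.
  move=> x0 xt.
  have xt' : x0 \in h :: t by rewrite inE xt orbT.
  have [ux [nPux [nx [zx [Nnx [[px [yx [Ppx [tyx ezx]]]] eux]]]]]] := hyp x0 xt'.
  exists (v * ux); split; first exact: nPmul.
  exists (v *: nx + px *: n), (px *: y + v *: yx); split.
    by apply: subD => //; apply: subZ.
  split.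
    by apply: (subD (spnP_sub t)); [apply: (subZ _ (spnP_sub t))|apply: (subZ _ (spnP_sub t))].
  rewrite -scalerA eux ezx !scalerDr scalerA mulrC -scalerA vh scalerDr.
  by rewrite !addrA.
have IHt := IH ht.
rewrite inE => /orP [/eqP ->|xt]; last exact: IHt.
have hS := sat_sub hN.
apply: sat_sat; exists v; split => //.
rewrite vh; apply: (subD hS); first exact: sat_incl.
exact: (spnP_in hS IHt).
Qed.

Lemma krull (N : set M) : is_submodule N ->
  [set m | forall Q, primary_for P Q -> N `<=` Q -> Q m] `<=` sat N.
Proof.
move=> hN.
set E := [set m | _].
have hE : is_submodule E.
  split; first by move=> Q hQ _; apply: (sub0 (proj1 hQ)).
  split; first by move=> x y hx hy Q hQ NQ; apply: (subD (proj1 hQ)); [apply: hx|apply: hy].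
  by move=> r x hx Q hQ NQ; apply: (subZ _ (proj1 hQ)); apply: hx.
have [e he] := noeth_modM noethR fgM hE.
have he' : forall x, E x <-> spn e x by move=> x; rewrite -spnE; apply: he.
pose F := sat (addS N (spnP e)).
have hF : is_submodule F by apply: sat_sub; apply: addS_sub => //; apply: spnP_sub.
have NF : N `<=` F.
  move=> x Nx; apply: sat_incl; exists x, 0; split => //; split; last by rewrite addr0.
  exact: (sub0 (spnP_sub e)).
have EF : E `<=` F.
  case: (pselect (exists m, ~ F m)) => [hm|hall]; last first.
    by move=> x _; apply: contrapT => nx; apply: hall; exists x.
  have [s [Pf [Qf hd]]] := pdec_exists noethR fgM hF hm.
  have [hp injP hFe hirr] := hd.
  move=> x Ex; rewrite hFe => i _.
  have [hPi [m0 em0]] := ass_comp noethR hd i.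
  have PiP : Pf i `<=` P.
    move=> a Pa; apply: contrapT => nPa.
    have Fm0 : F m0.
      apply: sat_sat; exists a; split => //; by move: Pa; rewrite em0.
    by case: hPi => _ [+ _]; rewrite em0 /colon /= scale1r.
  have FQ : F `<=` Qf i by move=> y; rewrite hFe; apply.
  case: (pselect (Pf i = P)) => [ePi|nPi].
    apply: Ex; first by rewrite -ePi; exact: hp.
    by move=> y /NF /FQ.
  have [a [Pa nPia]] : exists a, P a /\ ~ Pf i a.
    apply: contrapT => hn; apply: nPi; apply/seteqP; split => // a Pa.
    by apply: contrapT => na; apply: hn; exists a.
  apply: (prim_nzd noethR (hp i) nPia); apply: FQ; apply: sat_incl.
  exists 0, (a *: x); split; first exact: sub0.
  by split; [apply: spnP_scale => //; apply/he'|rewrite add0r].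
move=> x /he' ex.
have he2 : forall y, y \in e -> sat N y.
  apply: nakayama => // y ye; apply: EF; apply/he'; exact: spn_mem.
exact: (spn_sub (sat_sub hN) he2 ex).
Qed.

End Sat.

Section Main.
Variable R : comNzRingType.
Variable M : lmodType R.
Hypothesis noethR : noetherian_ring R.
Hypothesis fgM : fin_gen_module M.

Lemma prime_pow (P0 : set R) y k : prime_ideal P0 -> P0 (y ^+ k) -> P0 y.
Proof.
move=> hp; elim: k => [|k IH]; first by rewrite expr0; case: hp => _ [].
by rewrite exprS; case: hp => _ [_ h] /h [].
Qed.

Lemma xpart s (P : 'I_s -> set R) (Q : 'I_s -> set M) (N : set M) (X : set (set R)) S :
  primary_decomposition N P Q -> X `<=` Ass N ->
  X = Ass N `&` [set P0 | ~ S `<=` P0] ->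
  \bigcap_(i in [set i | X (P i)]) Q i = [set m | forall P0, X P0 -> ~ colon N m `<=` P0].
Proof.
move=> hd hX eX; have [hp injP hN hirr] := hd.
apply/seteqP; split => m.
  move=> hm P0 XP0 sub.
  have [hP0 _] := hX _ XP0.
  have [i [_ sub']] : exists i, [set: 'I_s] i /\ colon (Q i) m `<=` P0.
    apply: (prime_avoid hP0) => [i _|x hx]; first exact: (colon_ideal m (proj1 (hp i))).
    by apply: sub; rewrite /colon /= hN.
  case: (pselect (X (P i))) => XPi.
    by case: hP0 => _ [+ _]; apply; apply: sub'; rewrite /colon /= scale1r; apply: hm.
  have PiP0 : P i `<=` P0.
    move=> y Py; have [k hk] := prim_nil noethR m (hp i) Py.
    exact: (prime_pow hP0 (sub' _ hk)).
  have hA := ass_comp noethR hd i.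
  have SPi : S `<=` P i.
    apply: contrapT => nS; apply: XPi; rewrite eX; by split.
  by move: XP0; rewrite eX => -[_]; apply => x /SPi /PiP0.
move=> hm i XPi.
have [u [Nu nPu]] : exists u, colon N m u /\ ~ P i u.
  apply: contrapT => hn; apply: (hm _ XPi) => u hu; apply: contrapT => nu; apply: hn; by exists u.
apply: (prim_nzd noethR (hp i) nPu); move: Nu; rewrite /colon /= hN; exact.
Qed.

Lemma closure_gen s (P : 'I_s -> set R) (Q : 'I_s -> set M) (N : set M) (X : set (set R)) :
  is_submodule N -> primary_decomposition N P Q -> independent_over N X ->
  forall a b, X (P a) -> ~ X (P b) -> P b `<=` P a -> False.
Proof.
move=> hN hd indep a b Xa nXb sub.
have [hp injP hNe hirr] := hd.
pose L := \bigcap_(i in [set i | X (P i)]) Q i.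
have hPa := prim_prime (hp a).
have [m [Lm [Q2 [hQ2 [NQ2 nQ2m]]]]] : exists m, L m /\ exists Q2, primary_for (P a) Q2 /\ N `<=` Q2 /\ ~ Q2 m.
  apply: contrapT => hn.
  have LE : L `<=` sat (P a) N.
    move=> m Lm; apply: (krull noethR fgM hPa hN) => Q2 hQ2 NQ2; apply: contrapT => nm.
    by apply: hn; exists m; split => //; exists Q2.
  have LQb : L `<=` Q b.
    move=> x /LE [u [nPu Nu]]; apply: (prim_nzd noethR (hp b) (fun h => nPu (sub _ h))).
    by move: Nu; rewrite hNe; apply.
  apply: (hirr b); apply/seteqP; split => x.
    by rewrite hNe => hx i _; apply: hx.
  move=> hx; rewrite hNe => i _.
  case: (pselect (i = b)) => [->|ib]; last exact: hx.
  apply: LQb => j Xj; apply: hx => e; apply: nXb; by rewrite -e.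
pose Q' i := if i == a then Q a `&` Q2 else Q i.
have hp' : forall i, primary_for (P i) (Q' i).
  move=> i; rewrite /Q'; case: eqP => [->|_]; last exact: hp.
  exact: (prim_cap noethR (hp a) hQ2).
have hd' : primary_decomposition N P Q'.
  split => //.
  - apply/seteqP; split => x.
      move=> Nx i _; rewrite /Q'; case: eqP => _; last by move: Nx; rewrite hNe; apply.
      by split; [move: Nx; rewrite hNe; apply|apply: NQ2].
    move=> hx; rewrite hNe => i _; have := hx i I; rewrite /Q'.
    by case: eqP => [-> []|].
  - move=> j ej; case: (pselect (j = a)) => [jea|nja].
      apply: (hirr j); rewrite ej; apply/seteqP; split => x hx i ij; have := hx i ij;
        by rewrite /Q'; case: eqP => // e; exfalso; apply: ij; rewrite e jea.
    have [i [ij ePi]] := ass_in (D := [set i | i <> j]) (fun i _ => hp' i) ej (ass_comp noethR hd j).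
    by apply: ij; apply: injP.
have lam : forall (Qx : 'I_s -> set M), primary_decomposition N P Qx -> forall i, Lambda (P i) N (Qx i).
  by move=> Qx hx i; exists s, P, Qx; split => //; exists i.
have := indep s P Q Q' hd hd' (lam _ hd) (lam _ hd').
move=> eL; have : (\bigcap_(i in [set i | X (P i)]) Q' i) m by rewrite -eL.
by move=> /(_ a Xa); rewrite /Q' eqxx => -[].
Qed.

End Main.

Set Strict Implicit. Unset Implicit Arguments.

Theorem theorem2p2 (R : comNzRingType) (M : lmodType R) (N : set M)
    (X : set (set R)) :
  noetherian_ring R -> fin_gen_module M ->
  is_submodule N -> fin_gen_submodule N -> N `<` [set: M] ->
  X `<=` Ass N ->
  (independent_over N X <-> zariski_open_in (Ass N) X).
Proof.
move=> noethR fgM hN _ [_ hprop] hX; split.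
  move=> indep.
  have hm : exists m, ~ N m.
    apply: contrapT => hn; apply: hprop => x _; apply: contrapT => nx; apply: hn; by exists x.
  have [s [P [Q hd]]] := pdec_exists noethR fgM hN hm.
  have [hp injP hNe hirr] := hd.
  have cl := closure_gen noethR fgM hN hd indep.
  exists [set x | forall i, ~ X (P i) -> P i x].
  apply/seteqP; split => P0.
    move=> XP0; split; first exact: hX.
    move=> sub.
    have [c [_ ec]] := ass_in (D := [set: 'I_s]) (fun i _ => hp i) hNe (hX _ XP0).
    have [hP0 _] := hX _ XP0.
    have [b [nXb Pb]] := prime_avoid (J := P) (D := [set i | ~ X (P i)]) hP0
      (fun i _ => proj1 (prim_prime (hp i))) sub.
    apply: (cl c b); [by rewrite -ec | exact: nXb | by rewrite -ec].
  move=> [AP0 nS]; have [c [_ ec]] := ass_in (D := [set: 'I_s]) (fun i _ => hp i) hNe AP0.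
  apply: contrapT => nX; apply: nS => x hx; rewrite ec; apply: hx; by rewrite -ec.
move=> [S eX] s P Q Q' hd hd' _ _.
by rewrite (xpart noethR hd hX eX) (xpart noethR hd' hX eX).
Qed.
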